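(* Let $\varepsilon\neq0$ and $\varepsilon'$ be real constants and consider the almost-Riemannian structure on $\mathbb{R}^2$ (coordinates $(y,z)$) with orthonormal frame $F_1=(\varepsilon z+\frac{y^2}{2}+\varepsilon' y^3)\frac{\partial}{\partial z}$, $F_2=\frac{\partial}{\partial y}$. Its desingularization is the sub-Riemannian structure on $\mathbb{R}^3$ (coordinates $(x,y,z)$) with orthonormal frame $\widetilde F_1=\frac{\partial}{\partial x}+(\varepsilon z+\frac{y^2}{2}+\varepsilon' y^3)\frac{\partial}{\partial z}$, $\widetilde F_2=\frac{\partial}{\partial y}$. Then this sub-Riemannian structure is of Martinet type with Martinet surface $\{y=0\}$, and there is a local change of coordinates $(x,y,z)\mapsto(\tilde x,\tilde y,\tilde z)$ near the origin (for instance $\tilde x=\frac{e^{-\varepsilon x}}{-\varepsilon}-1$, $\tilde y=y\sqrt{1+2\varepsilon' y}$, $\tilde z=z e^{-\varepsilon x}$) in which the distribution is $\ker\big(d\tilde z-\frac{\tilde y^2}{2}d\tilde x\big)$ and the sub-Riemannian metric is $$g=\frac{d\tilde x^2}{\varepsilon^2(1+\tilde x)^2}+\frac{d\tilde y^2}{(1+2\varepsilon'\tilde y+o(\tilde y))^2},$$ i.e. it is a sub-Riemannian Martinet model of order zero.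
   Context: Desingularization: given a 2-dimensional ARS with local orthonormal frame $(F_1,F_2)$ on $M$ such that $F_1(q)=0$ at a point $q$ where the span of $F_1,F_2$ is one-dimensional, one defines on $M\times\mathbb{R}$ (extra coordinate $x$) the vector fields $\widetilde F_1,\widetilde F_2$ with $\pi_{1*}\widetilde F_i=F_i$, $\pi_{2*}\widetilde F_2=0$, $\pi_{2*}\widetilde F_1=\partial/\partial x$, and declares them orthonormal, giving a rank-2 sub-Riemannian structure on a 3-manifold. A rank-2 distribution $\Delta$ on a 3-manifold is of Martinet type near a point when the Martinet surface, the set of points $p$ with $[\Delta,\Delta](p)=\Delta(p)$, is a surface and $[[\Delta,\Delta],\Delta](p)=T_pM$ there. *)

(* Defs.v *)
From Stdlib Require Import Reals Lra List.
Import ListNotations.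
Open Scope R_scope.

Definition pt : Type := (R * R * R)%type.

(** i-th coordinate: 0 -> x, 1 -> y, 2 -> z. *)
Definition coord (v : pt) (i : nat) : R :=
  match i with
  | O => fst (fst v)
  | S O => snd (fst v)
  | _ => snd v
  end.

Definition vadd (u v : pt) : pt :=
  (coord u 0 + coord v 0, coord u 1 + coord v 1, coord u 2 + coord v 2).
Definition vscal (a : R) (v : pt) : pt :=
  (a * coord v 0, a * coord v 1, a * coord v 2).

Definition e (j : nat) : pt :=
  match j with
  | O => (1, 0, 0)
  | S O => (0, 1, 0)
  | _ => (0, 0, 1)
  end.

Definition pd (f : pt -> R) (j : nat) (p : pt) (l : R) : Prop :=
  derivable_pt_lim (fun t => f (vadd p (vscal t (e j)))) 0 l.

Definition cont_at (f : pt -> R) (p : pt) : Prop :=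
  forall eps, 0 < eps -> exists d, 0 < d /\
    forall q, Rabs (coord q 0 - coord p 0) < d -> Rabs (coord q 1 - coord p 1) < d ->
      Rabs (coord q 2 - coord p 2) < d -> Rabs (f q - f p) < eps.

Fixpoint Cn (n : nat) (f : pt -> R) (U : pt -> Prop) : Prop :=
  match n with
  | O => forall p, U p -> cont_at f p
  | S m => forall j, (j < 3)%nat ->
      exists g : pt -> R, (forall p, U p -> pd f j p (g p)) /\ Cn m g U
  end.

Definition smooth_on (f : pt -> R) (U : pt -> Prop) : Prop := forall n, Cn n f U.

Definition ball0 (r : R) (p : pt) : Prop :=
  coord p 0 ^ 2 + coord p 1 ^ 2 + coord p 2 ^ 2 < r ^ 2.

Definition vfield : Type := pt -> pt.

Definition is_lie_bracket (X Y Z : vfield) : Prop :=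
  forall p i, (i < 3)%nat ->
    exists dX dY : nat -> R,
      (forall j, (j < 3)%nat ->
         pd (fun q => coord (X q) i) j p (dX j) /\
         pd (fun q => coord (Y q) i) j p (dY j)) /\
      coord (Z p) i =
        (coord (X p) 0 * dY 0%nat - coord (Y p) 0 * dX 0%nat) +
        (coord (X p) 1 * dY 1%nat - coord (Y p) 1 * dX 1%nat) +
        (coord (X p) 2 * dY 2%nat - coord (Y p) 2 * dX 2%nat).

Fixpoint lincomb (cs : list R) (l : list pt) : pt :=
  match cs, l with
  | c :: cs', u :: l' => vadd (vscal c u) (lincomb cs' l')
  | _, _ => (0, 0, 0)
  end.
Definition in_span (l : list pt) (v : pt) : Prop := exists cs, v = lincomb cs l.

(** The distribution Delta = span(X1, X2) and the distributions
    [SDist,SDist] = span(X1, X2, [X1,X2]) and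
    [[SDist,SDist],SDist] = span(X1, X2, [X1,X2], [X1,[X1,X2]], [X2,[X1,X2]]),
    where B = [X1,X2], B1 = [X1,B], B2 = [X2,B]. *)
Definition SDist (X1 X2 : vfield) (p : pt) : pt -> Prop := in_span [X1 p; X2 p].
Definition SDist2 (X1 X2 B : vfield) (p : pt) : pt -> Prop :=
  in_span [X1 p; X2 p; B p].
Definition SDist3 (X1 X2 B B1 B2 : vfield) (p : pt) : pt -> Prop :=
  in_span [X1 p; X2 p; B p; B1 p; B2 p].

Definition martinet_pt (X1 X2 B : vfield) (p : pt) : Prop :=
  forall v, SDist2 X1 X2 B p v <-> SDist X1 X2 p v.

Definition fM (eps eps' y z : R) : R := eps * z + y ^ 2 / 2 + eps' * y ^ 3.
Definition Ft1 (eps eps' : R) : vfield :=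
  fun p => (1, 0, fM eps eps' (coord p 1) (coord p 2)).
Definition Ft2 : vfield := fun _ => (0, 1, 0).

(** Differential of Phi at p applied to v, i-th component, given the Jacobian J. *)
Definition dapp (J : nat -> nat -> R) (i : nat) (v : pt) : R :=
  J i 0%nat * coord v 0 + J i 1%nat * coord v 1 + J i 2%nat * coord v 2.

Definition det3 (J : nat -> nat -> R) : R :=
  J 0%nat 0%nat * (J 1%nat 1%nat * J 2%nat 2%nat - J 1%nat 2%nat * J 2%nat 1%nat)
  - J 0%nat 1%nat * (J 1%nat 0%nat * J 2%nat 2%nat - J 1%nat 2%nat * J 2%nat 0%nat)
  + J 0%nat 2%nat * (J 1%nat 0%nat * J 2%nat 1%nat - J 1%nat 1%nat * J 2%nat 0%nat).

(* Main.v *)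
Require Import Defs.
From Stdlib Require Import Reals List Lra Psatz ClassicalEpsilon.
Import ListNotations.
Open Scope R_scope.

Lemma coord_vadd u v i : coord (vadd u v) i = coord u i + coord v i.
Proof. destruct i as [|[|i]]; reflexivity. Qed.
Lemma coord_vscal a v i : coord (vscal a v) i = a * coord v i.
Proof. destruct i as [|[|i]]; reflexivity. Qed.

Lemma dpl_ext f g x l : (forall t, f t = g t) -> derivable_pt_lim g x l -> derivable_pt_lim f x l.
Proof. intros H Hg eps Heps. destruct (Hg eps Heps) as [d Hd]. exists d. intros h Hh Hh'. rewrite !H. apply Hd; auto. Qed.

Lemma dpl_l f x l l' : derivable_pt_lim f x l -> l = l' -> derivable_pt_lim f x l'.
Proof. intros H ->; exact H. Qed.

Lemma dlin a b c : derivable_pt_lim (fun u => a * u + b) c a.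
Proof.
  intros eps He. exists (mkposreal eps He). intros h Hh _.
  replace ((a * (c + h) + b - (a * c + b)) / h - a) with 0 by (field; auto).
  rewrite Rabs_R0; auto.
Qed.

Lemma dpl_lin g c d l : derivable_pt_lim g c l -> derivable_pt_lim (fun t => g (c + t * d)) 0 (l * d).
Proof.
  intros H.
  assert (H' : derivable_pt_lim g ((fun t => d * t + c) 0) l).
  { simpl. replace (d * 0 + c) with c by ring. exact H. }
  pose proof (derivable_pt_lim_comp _ _ _ _ _ (dlin d c 0) H') as H2.
  apply (dpl_ext _ _ _ _ (fun t => f_equal g (Rplus_comm _ _ ))) in H2.
  eapply dpl_ext; [|exact H2]. intros t. unfold comp. f_equal. ring.
Qed.

Lemma dexp a c : derivable_pt_lim (fun u => exp (a * u)) c (a * exp (a * c)).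
Proof.
  pose proof (derivable_pt_lim_comp _ _ _ _ _ (dlin a 0 c) (derivable_pt_lim_exp (a * c + 0))) as H.
  eapply dpl_ext; [|eapply dpl_l; [exact H|]].
  - intros t; unfold comp; f_equal; ring.
  - rewrite Rplus_0_r; ring.
Qed.

Lemma dsq k c : 0 < 1 + 2 * k * c ->
  derivable_pt_lim (fun u => sqrt (1 + 2 * k * u)) c (k * / sqrt (1 + 2 * k * c)).
Proof.
  intros Hc.
  assert (Hc' : 0 < (2 * k) * c + 1) by lra.
  pose proof (derivable_pt_lim_comp _ _ _ _ _ (dlin (2*k) 1 c) (derivable_pt_lim_sqrt _ Hc')) as H.
  eapply dpl_ext; [|eapply dpl_l; [exact H|]].
  - intros t; unfold comp; f_equal; ring.
  - replace (2 * k * c + 1) with (1 + 2 * k * c) by ring.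
    assert (0 < sqrt (1 + 2 * k * c)) by (apply sqrt_lt_R0; lra). field; lra.
Qed.

Lemma dsi k c : 0 < 1 + 2 * k * c ->
  derivable_pt_lim (fun u => / sqrt (1 + 2 * k * u)) c
    (- (k * (/ sqrt (1 + 2 * k * c) * (/ sqrt (1 + 2 * k * c) * / sqrt (1 + 2 * k * c))))).
Proof.
  intros Hc.
  assert (Hs : 0 < sqrt (1 + 2 * k * c)) by (apply sqrt_lt_R0; lra).
  pose proof (derivable_pt_lim_div (fct_cte 1) _ _ _ _ (derivable_pt_lim_const 1 c) (dsq k c Hc)) as H.
  assert (Hn : sqrt (1 + 2 * k * c) <> 0) by lra.
  specialize (H Hn).
  eapply dpl_ext; [|eapply dpl_l; [exact H|]].
  - intros t; unfold div_fct, fct_cte. unfold Rdiv. ring.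
  - unfold fct_cte, Rsqr. field. lra.
Qed.

Lemma dpl_cont g x l : derivable_pt_lim g x l -> continuity_pt g x.
Proof. intros H. apply derivable_continuous_pt. exists l. exact H. Qed.

Lemma cont_coord g p i : continuity_pt g (coord p i) -> cont_at (fun q => g (coord q i)) p.
Proof.
  intros Hg eps Heps. destruct (Hg eps Heps) as [a [Ha Hb]]. exists a; split; [lra|].
  intros q H0 H1 H2. destruct (Req_dec (coord q i) (coord p i)) as [E|E].
  - rewrite E, Rminus_eq_0, Rabs_R0; auto.
  - apply (Hb (coord q i)). split. split; [exact I| auto].
    simpl. unfold R_dist. destruct i as [|[|i]]; assumption.
Qed.

Lemma cont_add f g p : cont_at f p -> cont_at g p -> cont_at (fun q => f q + g q) p.
Proof.
  intros Hf Hg eps He.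
  destruct (Hf (eps/2)) as [d1 [Hd1 H1]]; [lra|].
  destruct (Hg (eps/2)) as [d2 [Hd2 H2]]; [lra|].
  exists (Rmin d1 d2). split; [apply Rmin_pos; auto|].
  intros q A B C.
  assert (Hm1 := Rmin_l d1 d2). assert (Hm2 := Rmin_r d1 d2).
  specialize (H1 q ltac:(lra) ltac:(lra) ltac:(lra)).
  specialize (H2 q ltac:(lra) ltac:(lra) ltac:(lra)).
  replace (f q + g q - (f p + g p)) with ((f q - f p) + (g q - g p)) by ring.
  eapply Rle_lt_trans; [apply Rabs_triang|]. lra.
Qed.

Lemma cont_mul f g p : cont_at f p -> cont_at g p -> cont_at (fun q => f q * g q) p.
Proof.
  intros Hf Hg eps He.
  set (A := Rabs (f p)). set (B := Rabs (g p)).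
  assert (HA : 0 <= A) by apply Rabs_pos. assert (HB : 0 <= B) by apply Rabs_pos.
  destruct (Hf (Rmin 1 (eps / (3 * (B + 1))))) as [d1 [Hd1 H1]].
  { apply Rmin_pos; [lra|]. apply Rdiv_lt_0_compat; lra. }
  destruct (Hg (Rmin 1 (eps / (3 * (A + 1))))) as [d2 [Hd2 H2]].
  { apply Rmin_pos; [lra|]. apply Rdiv_lt_0_compat; lra. }
  exists (Rmin d1 d2). split; [apply Rmin_pos; auto|].
  intros q Q1 Q2 Q3.
  assert (Hm1 := Rmin_l d1 d2). assert (Hm2 := Rmin_r d1 d2).
  specialize (H1 q ltac:(lra) ltac:(lra) ltac:(lra)).
  specialize (H2 q ltac:(lra) ltac:(lra) ltac:(lra)).
  set (u := f q - f p) in *. set (w := g q - g p) in *.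
  replace (f q * g q - f p * g p) with (u * w + f p * w + g p * u) by (unfold u, w; ring).
  assert (Hu1 : Rabs u < 1) by (eapply Rlt_le_trans; [exact H1| apply Rmin_l]).
  assert (Hu2 : Rabs u < eps / (3 * (B + 1))) by (eapply Rlt_le_trans; [exact H1| apply Rmin_r]).
  assert (Hw2 : Rabs w < eps / (3 * (A + 1))) by (eapply Rlt_le_trans; [exact H2| apply Rmin_r]).
  assert (E1 : B * (eps / (3 * (B + 1))) <= eps / 3).
  { apply (Rmult_le_reg_r (3 * (B+1))); [lra|]. field_simplify; nra. }
  assert (E2 : A * (eps / (3 * (A + 1))) <= eps / 3).
  { apply (Rmult_le_reg_r (3 * (A+1))); [lra|]. field_simplify; nra. }
  assert (E3 : eps / (3 * (A + 1)) <= eps / 3).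
  { apply (Rmult_le_reg_r (3 * (A+1))); [lra|]. field_simplify; nra. }
  assert (Ru := Rabs_pos u). assert (Rw := Rabs_pos w).
  eapply Rle_lt_trans. { eapply Rle_trans; [apply Rabs_triang|]. apply Rplus_le_compat_r. apply Rabs_triang. }
  rewrite !Rabs_mult. fold A B.
  assert (Rabs u * Rabs w <= Rabs w) by nra.
  assert (A * Rabs w <= A * (eps / (3 * (A + 1)))) by nra.
  assert (B * Rabs u <= B * (eps / (3 * (B + 1)))) by nra.
  nra.
Qed.

Inductive ex := Cst (c : R) | V (i : nat) | Ad (a b : ex) | Mu (a b : ex) | Ex (a : R) | Sq | Si.

Fixpoint ev (k : R) (E : ex) (q : pt) : R :=
  match E with
  | Cst c => c
  | V i => coord q i
  | Ad a b => ev k a q + ev k b q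
  | Mu a b => ev k a q * ev k b q
  | Ex a => exp (a * coord q 0)
  | Sq => sqrt (1 + 2 * k * coord q 1)
  | Si => / sqrt (1 + 2 * k * coord q 1)
  end.

Fixpoint dv (k : R) (E : ex) (j : nat) : ex :=
  match E with
  | Cst _ => Cst 0
  | V i => Cst (coord (e j) i)
  | Ad a b => Ad (dv k a j) (dv k b j)
  | Mu a b => Ad (Mu (dv k a j) b) (Mu a (dv k b j))
  | Ex a => Mu (Cst (a * coord (e j) 0)) (Ex a)
  | Sq => Mu (Cst (k * coord (e j) 1)) Si
  | Si => Mu (Cst (- (k * coord (e j) 1))) (Mu Si (Mu Si Si))
  end.

Fixpoint ok (k : R) (E : ex) (q : pt) : Prop :=
  match E with
  | Ad a b | Mu a b => ok k a q /\ ok k b q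
  | Sq | Si => 0 < 1 + 2 * k * coord q 1
  | _ => True
  end.

Lemma ok_all k E q : 0 < 1 + 2 * k * coord q 1 -> ok k E q.
Proof. intros H; induction E; simpl; tauto. Qed.

Lemma shift p t j i : coord (vadd p (vscal t (e j))) i = coord p i + t * coord (e j) i.
Proof. rewrite coord_vadd, coord_vscal; reflexivity. Qed.

Lemma vadd0 p v : vadd p (vscal 0 v) = p.
Proof. destruct p as [[x y] z]; unfold vadd, vscal, coord; simpl; f_equal; [f_equal|]; ring. Qed.

Lemma pd_ev k E j p : ok k E p -> pd (ev k E) j p (ev k (dv k E j) p).
Proof.
  unfold pd. induction E; cbn [ev dv ok]; intros Hok.
  - eapply dpl_ext; [|apply (derivable_pt_lim_const c 0)]. reflexivity.
  - eapply dpl_ext; [intros t; apply shift|].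
    eapply dpl_l; [apply (dpl_lin (fun u => u) (coord p i) (coord (e j) i) 1 (derivable_pt_lim_id _))|]. ring.
  - destruct Hok as [H1 H2].
    pose proof (derivable_pt_lim_plus _ _ _ _ _ (IHE1 H1) (IHE2 H2)) as H. exact H.
  - destruct Hok as [H1 H2].
    pose proof (derivable_pt_lim_mult _ _ _ _ _ (IHE1 H1) (IHE2 H2)) as H.
    eapply dpl_l; [exact H|]. cbv beta. rewrite vadd0. reflexivity.
  - eapply dpl_ext; [intros t; rewrite shift; reflexivity|].
    eapply dpl_l; [apply (dpl_lin _ _ _ _ (dexp a (coord p 0)))|]. ring.
  - eapply dpl_ext; [intros t; rewrite shift; reflexivity|].
    eapply dpl_l; [apply (dpl_lin _ _ _ _ (dsq k (coord p 1) Hok))|]. ring.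
  - eapply dpl_ext; [intros t; rewrite shift; reflexivity|].
    eapply dpl_l; [apply (dpl_lin _ _ _ _ (dsi k (coord p 1) Hok))|]. ring.
Qed.

Lemma cont_ev k E p : ok k E p -> cont_at (ev k E) p.
Proof.
  induction E; cbn [ev dv ok]; intros Hok.
  - intros eps He; exists 1; split; [lra|]; intros; rewrite Rminus_diag, Rabs_R0; auto.
  - apply (cont_coord (fun u => u)). eapply dpl_cont; apply derivable_pt_lim_id.
  - destruct Hok; apply cont_add; auto.
  - destruct Hok; apply cont_mul; auto.
  - apply (cont_coord (fun u => exp (a * u))). eapply dpl_cont; apply dexp.
  - apply (cont_coord (fun u => sqrt (1 + 2 * k * u))). eapply dpl_cont; apply dsq; auto.
  - apply (cont_coord (fun u => / sqrt (1 + 2 * k * u))). eapply dpl_cont; apply dsi; auto.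
Qed.

Lemma Cn_ev k U (HU : forall q, U q -> 0 < 1 + 2 * k * coord q 1) n : forall E, Cn n (ev k E) U.
Proof.
  induction n; simpl; intros E.
  - intros p Hp. apply cont_ev, ok_all, HU, Hp.
  - intros j _. exists (ev k (dv k E j)). split; [|apply IHn].
    intros p Hp. apply pd_ev, ok_all, HU, Hp.
Qed.

Lemma pd_ext f g j p l : (forall q, f q = g q) -> pd g j p l -> pd f j p l.
Proof. intros H. unfold pd. apply dpl_ext. intros; apply H. Qed.

Lemma pt_eq u v : coord u 0 = coord v 0 -> coord u 1 = coord v 1 -> coord u 2 = coord v 2 -> u = v.
Proof. destruct u as [[a b] c], v as [[a' b'] c']; simpl; intros -> -> ->; reflexivity. Qed.

Lemma lc2 cs u1 u2 i : coord (lincomb cs [u1; u2]) i = nth 0 cs 0 * coord u1 i + nth 1 cs 0 * coord u2 i.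
Proof. destruct cs as [|a [|b [|c cs]]]; destruct i as [|[|i]]; cbn; ring. Qed.
Lemma lc3 cs u1 u2 u3 i : coord (lincomb cs [u1; u2; u3]) i =
  nth 0 cs 0 * coord u1 i + nth 1 cs 0 * coord u2 i + nth 2 cs 0 * coord u3 i.
Proof. destruct cs as [|a [|b [|c [|d cs]]]]; destruct i as [|[|i]]; cbn; ring. Qed.
Lemma lc5 cs u1 u2 u3 u4 u5 i : coord (lincomb cs [u1; u2; u3; u4; u5]) i =
  nth 0 cs 0 * coord u1 i + nth 1 cs 0 * coord u2 i + nth 2 cs 0 * coord u3 i
  + nth 3 cs 0 * coord u4 i + nth 4 cs 0 * coord u5 i.
Proof. destruct cs as [|a [|b [|c [|d [|f [|g cs]]]]]]; destruct i as [|[|i]]; cbn; ring. Qed.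

Lemma lie_ev k (X Y Z : vfield) (XE YE : nat -> ex) :
  (forall q i, (i < 3)%nat -> coord (X q) i = ev k (XE i) q) ->
  (forall q i, (i < 3)%nat -> coord (Y q) i = ev k (YE i) q) ->
  (forall q i, ok k (XE i) q /\ ok k (YE i) q) ->
  (forall p i, (i < 3)%nat -> coord (Z p) i =
     (coord (X p) 0 * ev k (dv k (YE i) 0) p - coord (Y p) 0 * ev k (dv k (XE i) 0) p) +
     (coord (X p) 1 * ev k (dv k (YE i) 1) p - coord (Y p) 1 * ev k (dv k (XE i) 1) p) +
     (coord (X p) 2 * ev k (dv k (YE i) 2) p - coord (Y p) 2 * ev k (dv k (XE i) 2) p)) ->
  is_lie_bracket X Y Z.
Proof.
  intros HX HY Hok HZ p i Hi.
  exists (fun j => ev k (dv k (XE i) j) p), (fun j => ev k (dv k (YE i) j) p).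
  split; [|apply HZ; auto].
  intros j Hj; split.
  - eapply pd_ext; [intros q; apply HX; auto|]. apply pd_ev, Hok.
  - eapply pd_ext; [intros q; apply HY; auto|]. apply pd_ev, Hok.
Qed.

Definition Bf (k : R) : vfield := fun p => (0, 0, -(coord p 1 + 3 * k * coord p 1 ^ 2)).
Definition B1f (eps k : R) : vfield := fun p => (0, 0, eps * (coord p 1 + 3 * k * coord p 1 ^ 2)).
Definition B2f (k : R) : vfield := fun p => (0, 0, -(1 + 6 * k * coord p 1)).

Definition FE eps k := Ad (Ad (Mu (Cst eps) (V 2)) (Mu (Cst (1/2)) (Mu (V 1) (V 1)))) (Mu (Cst k) (Mu (V 1) (Mu (V 1) (V 1)))).
Definition BE k := Mu (Cst (-1)) (Ad (V 1) (Mu (Cst (3 * k)) (Mu (V 1) (V 1)))).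
Definition F1E eps k (i : nat) := match i with O => Cst 1 | S O => Cst 0 | _ => FE eps k end.
Definition F2E (i : nat) := match i with O => Cst 0 | S O => Cst 1 | _ => Cst 0 end.
Definition BEi k (i : nat) := match i with O => Cst 0 | S O => Cst 0 | _ => BE k end.

Lemma F1E_ok eps k q i : (i < 3)%nat -> coord (Ft1 eps k q) i = ev k (F1E eps k i) q.
Proof. intros; destruct q as [[x y] z]; destruct i as [|[|[|i]]]; cbn; unfold fM; try field; lia. Qed.
Lemma F2E_ok k q i : (i < 3)%nat -> coord (Ft2 q) i = ev k (F2E i) q.
Proof. intros; destruct i as [|[|[|i]]]; cbn; try field; lia. Qed.
Lemma BE_ok k q i : (i < 3)%nat -> coord (Bf k q) i = ev k (BEi k i) q.
Proof. intros; destruct q as [[x y] z]; destruct i as [|[|[|i]]]; cbn; try field; lia. Qed.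

Lemma part1_brackets eps k :
  is_lie_bracket (Ft1 eps k) Ft2 (Bf k) /\
  is_lie_bracket (Ft1 eps k) (Bf k) (B1f eps k) /\
  is_lie_bracket Ft2 (Bf k) (B2f k).
Proof.
  split; [|split].
  - apply (lie_ev k _ _ _ (F1E eps k) F2E).
    + apply F1E_ok. + apply F2E_ok.
    + intros q i; destruct i as [|[|[|i]]]; cbn; tauto.
    + intros p i Hi; destruct p as [[x y] z]; destruct i as [|[|[|i]]]; cbn; try field; lia.
  - apply (lie_ev k _ _ _ (F1E eps k) (BEi k)).
    + apply F1E_ok. + apply BE_ok.
    + intros q i; destruct i as [|[|[|i]]]; cbn; tauto.
    + intros p i Hi; destruct p as [[x y] z]; destruct i as [|[|[|i]]]; cbn; try field; lia.
  - apply (lie_ev k _ _ _ F2E (BEi k)).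
    + apply F2E_ok. + apply BE_ok.
    + intros q i; destruct i as [|[|[|i]]]; cbn; tauto.
    + intros p i Hi; destruct p as [[x y] z]; destruct i as [|[|[|i]]]; cbn; try field; lia.
Qed.

Definition rr (k : R) := / (4 * (Rabs k + 1)).

Lemma rr_pos k : 0 < rr k.
Proof. unfold rr. assert (H := Rabs_pos k). apply Rinv_0_lt_compat. lra. Qed.

Lemma ball_y r p : 0 < r -> ball0 r p -> Rabs (coord p 1) < r.
Proof.
  unfold ball0; intros Hr H.
  assert (coord p 1 ^ 2 < r ^ 2) by nra.
  apply Rabs_def1; nra.
Qed.

Lemma small k y : Rabs y < rr k -> Rabs (k * y) < 1/4.
Proof.
  intros H. rewrite Rabs_mult.
  assert (Hr : (Rabs k + 1) * rr k = 1/4) by (unfold rr; field; assert (H0 := Rabs_pos k); lra).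
  assert (H0 := Rabs_pos k). assert (H1 := Rabs_pos y). nra.
Qed.

Lemma Yinj k a b : Rabs (k * a) < 1/4 -> Rabs (k * b) < 1/4 ->
  a * sqrt (1 + 2 * k * a) = b * sqrt (1 + 2 * k * b) -> a = b.
Proof.
  intros Ha Hb H.
  apply Rabs_def2 in Ha. apply Rabs_def2 in Hb.
  assert (Pa : 0 < 1 + 2 * k * a) by lra. assert (Pb : 0 < 1 + 2 * k * b) by lra.
  assert (Sa := sqrt_lt_R0 _ Pa). assert (Sb := sqrt_lt_R0 _ Pb).
  assert (Qa := sqrt_sqrt _ (Rlt_le _ _ Pa)). assert (Qb := sqrt_sqrt _ (Rlt_le _ _ Pb)).
  set (sa := sqrt (1 + 2 * k * a)) in *. set (sb := sqrt (1 + 2 * k * b)) in *.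
  assert (Hsq : a * a * (1 + 2 * k * a) = b * b * (1 + 2 * k * b)).
  { rewrite <- Qa, <- Qb. replace (a * a * (sa * sa)) with ((a * sa) * (a * sa)) by ring. rewrite H. ring. }
  assert (Hf : (a - b) * (a + b + 2 * (k * a * a + k * a * b + k * b * b)) = 0) by (rewrite <- (Rminus_diag 0); lra || nra).
  destruct (Rmult_integral _ _ Hf) as [E|E]; [lra|].
  destruct (Rtotal_order a 0) as [A|[A|A]].
  - assert (b < 0) by nra. nra.
  - subst a. assert (b * sb = 0) by lra. nra.
  - assert (b > 0) by nra. nra.
Qed.

Definition hD (k y : R) := sqrt (1 + 2 * k * y) + y * (k * / sqrt (1 + 2 * k * y)).

Definition hh (k r t : R) : R :=
  match excluded_middle_informative (exists y, Rabs y < r /\ y * sqrt (1 + 2 * k * y) = t) with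
  | left H => hD k (proj1_sig (constructive_indefinite_description _ H))
  | right _ => 1 + 2 * k * t
  end.

Lemma hh_spec k y : Rabs y < rr k -> hh k (rr k) (y * sqrt (1 + 2 * k * y)) = hD k y.
Proof.
  intros Hy. unfold hh. destruct excluded_middle_informative as [H|H].
  - destruct (constructive_indefinite_description _ H) as [y' [Hy' E]]; simpl.
    f_equal. apply (Yinj k); auto using small.
  - exfalso; apply H; exists y; auto.
Qed.

Lemma core k y : Rabs (k * y) < 1/4 ->
  Rabs (hD k y - (1 + 2 * k * (y * sqrt (1 + 2 * k * y)))) <= 10 * (k * y) ^ 2.
Proof.
  intros Hw. apply Rabs_def2 in Hw.
  assert (P : 0 < 1 + 2 * k * y) by lra.
  assert (Spos := sqrt_lt_R0 _ P). assert (Q := sqrt_sqrt _ (Rlt_le _ _ P)).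
  unfold hD. set (s := sqrt (1 + 2 * k * y)) in *.
  assert (Q' : s * s = 1 + 2 * (k * y)) by lra. clear Q.
  replace (2 * k * (y * s)) with (2 * (k * y) * s) by ring.
  replace (y * (k * / s)) with ((k * y) * / s) by ring.
  set (w := k * y) in *.
  assert (Sh : s > 1/2). { nra. }
  set (D := 1 + w - s).
  assert (HD : D * (1 + w + s) = w * w) by (unfold D; nra).
  assert (D1 : D <= w * w) by nra. assert (D2 : - (w * w) <= D) by nra.
  set (q := s + w * / s - (1 + 2 * w * s)).
  assert (Hq : q * s = D - 4 * w * w).
  { unfold q, D.
    replace ((s + w * / s - (1 + 2 * w * s)) * s) with (s * s + w - s - 2 * w * (s * s)) by (field; lra).
    rewrite Q'. ring. }
  apply Rabs_le. split; nra.
Qed.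

Lemma hh_o k : forall c, 0 < c -> exists d, 0 < d /\
  forall t, t <> 0 -> Rabs t < d -> Rabs (hh k (rr k) t - (1 + 2 * k * t)) <= c * Rabs t.
Proof.
  intros c Hc. assert (Hk2 : 0 <= k ^ 2) by nra.
  exists (c / (48 * (k ^ 2 + 1))). split; [apply Rdiv_lt_0_compat; lra|].
  set (d := c / (48 * (k ^ 2 + 1))).
  assert (Hd : d * (48 * (k ^ 2 + 1)) = c) by (unfold d; field; lra).
  intros t Ht Htd. unfold hh. destruct excluded_middle_informative as [H|H].
  - destruct (constructive_indefinite_description _ H) as [y [Hy E]]; simpl. subst t.
    assert (Hw := small k y Hy).
    eapply Rle_trans; [apply core; auto|].
    apply Rabs_def2 in Hw.
    assert (P : 0 < 1 + 2 * k * y) by lra.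
    assert (Spos := sqrt_lt_R0 _ P). assert (Q := sqrt_sqrt _ (Rlt_le _ _ P)).
    set (s := sqrt (1 + 2 * k * y)) in *.
    assert (Sh : s > 1/2) by nra.
    rewrite Rabs_mult, (Rabs_right s) in * by lra.
    set (Y := Rabs y) in *. assert (HY : 0 <= Y) by apply Rabs_pos.
    assert (E2 : (k * y) ^ 2 = k ^ 2 * (Y * Y)) by (pose proof (Rsqr_abs y) as RA; unfold Rsqr in RA; fold Y in RA; rewrite <- RA; ring).
    rewrite E2.
    assert (Y2 : Y <= 2 * d) by nra.
    assert (A0 : Y * Y <= 2 * d * Y) by nra.
    assert (A1 : k ^ 2 * (Y * Y) <= k ^ 2 * (2 * d) * Y).
    { replace (k ^ 2 * (2 * d) * Y) with (k ^ 2 * (2 * d * Y)) by ring. apply Rmult_le_compat_l; auto. }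
    assert (A3 : 10 * (k ^ 2 * (2 * d) * Y) <= c * Y / 2).
    { rewrite <- Hd. assert (0 <= d * Y) by (apply Rmult_le_pos; unfold d; [apply Rlt_le, Rdiv_lt_0_compat|]; lra).
      nra. }
    assert (A2 : c * Y / 2 <= c * (Y * s)) by nra.
    nra.
  - rewrite Rminus_diag, Rabs_R0. assert (Habs := Rabs_pos t). nra.
Qed.

Lemma martinet eps k p : Rabs (k * coord p 1) < 1/4 ->
  (martinet_pt (Ft1 eps k) Ft2 (Bf k) p <-> coord p 1 = 0) /\
  (coord p 1 = 0 -> forall v, SDist3 (Ft1 eps k) Ft2 (Bf k) (B1f eps k) (B2f k) p v).
Proof.
  destruct p as [[x y] z]. cbn [coord fst snd]. intros Hw. apply Rabs_def2 in Hw.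
  split; [split|].
  - intros H.
    assert (HB : SDist (Ft1 eps k) Ft2 ((x, y), z) (Bf k ((x, y), z))).
    { apply H. exists [0; 0; 1]. apply pt_eq; rewrite lc3; cbn [nth]; unfold Bf, Ft1, Ft2; cbn [coord fst snd]; ring. }
    destruct HB as [cs Hcs].
    assert (E0 := f_equal (fun w => coord w 0) Hcs).
    assert (E2 := f_equal (fun w => coord w 2) Hcs).
    cbv beta in E0, E2. rewrite lc2 in E0, E2.
    unfold Bf, Ft1, Ft2, fM in E0, E2; cbn [coord fst snd] in E0, E2.
    set (a := nth 0 cs 0) in *. set (b := nth 1 cs 0) in *.
    assert (Ha : a = 0) by lra. rewrite Ha in E2.
    assert (Hy : y * (1 + 3 * (k * y)) = 0) by nra.
    destruct (Rmult_integral _ _ Hy); [auto | lra].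
  - intros Hy0 v. subst y. unfold SDist2, SDist. split.
    + intros [cs Hcs]. exists [nth 0 cs 0; nth 1 cs 0]. subst v.
      apply pt_eq; rewrite lc3, lc2; cbn [nth]; unfold Bf; cbn [coord fst snd]; ring.
    + intros [cs Hcs]. exists [nth 0 cs 0; nth 1 cs 0; 0]. subst v.
      apply pt_eq; rewrite lc3, lc2; cbn [nth]; unfold Bf; cbn [coord fst snd]; ring.
  - intros Hy0 v. subst y. destruct v as [[v0 v1] v2].
    exists [v0; v1; 0; 0; eps * z * v0 - v2].
    apply pt_eq; rewrite lc5; cbn [nth]; unfold Bf, B1f, B2f, Ft1, Ft2, fM; cbn [coord fst snd]; field.
Qed.

Definition P0 eps := Ad (Mu (Cst (- / eps)) (Ex (- eps))) (Cst (-1)).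
Definition P1 := Mu (V 1) Sq.
Definition P2 eps := Mu (V 2) (Ex (- eps)).
Definition Pi eps (i : nat) := match i with O => P0 eps | S O => P1 | _ => P2 eps end.
Definition Phi eps k (q : pt) : pt := (ev k (P0 eps) q, ev k P1 q, ev k (P2 eps) q).
Definition Jf eps k (p : pt) (i j : nat) := ev k (dv k (Pi eps i) j) p.

Lemma Phi_coord eps k q i : (i < 3)%nat -> coord (Phi eps k q) i = ev k (Pi eps i) q.
Proof. intros; destruct i as [|[|[|i]]]; try reflexivity; lia. Qed.

Section J.
Variables (eps k x y z : R).
Hypothesis Heps : eps <> 0.
Lemma J00 : Jf eps k ((x, y), z) 0 0 = exp (- eps * x).
Proof. unfold Jf, Pi, P0; cbn [ev dv coord e fst snd]. field. auto. Qed.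
Lemma J01 : Jf eps k ((x, y), z) 0 1 = 0.
Proof. unfold Jf, Pi, P0; cbn [ev dv coord e fst snd]. field. auto. Qed.
Lemma J02 : Jf eps k ((x, y), z) 0 2 = 0.
Proof. unfold Jf, Pi, P0; cbn [ev dv coord e fst snd]. field. auto. Qed.
Lemma J10 : Jf eps k ((x, y), z) 1 0 = 0.
Proof. unfold Jf, Pi, P1; cbn [ev dv coord e fst snd]. ring. Qed.
Lemma J11 : Jf eps k ((x, y), z) 1 1 = hD k y.
Proof. unfold Jf, Pi, P1, hD; cbn [ev dv coord e fst snd]. ring. Qed.
Lemma J12 : Jf eps k ((x, y), z) 1 2 = 0.
Proof. unfold Jf, Pi, P1; cbn [ev dv coord e fst snd]. ring. Qed.
Lemma J20 : Jf eps k ((x, y), z) 2 0 = - eps * z * exp (- eps * x).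
Proof. unfold Jf, Pi, P2; cbn [ev dv coord e fst snd]. ring. Qed.
Lemma J21 : Jf eps k ((x, y), z) 2 1 = 0.
Proof. unfold Jf, Pi, P2; cbn [ev dv coord e fst snd]. ring. Qed.
Lemma J22 : Jf eps k ((x, y), z) 2 2 = exp (- eps * x).
Proof. unfold Jf, Pi, P2; cbn [ev dv coord e fst snd]. ring. Qed.
End J.

Lemma hD_pos k y : Rabs (k * y) < 1/4 -> 0 < hD k y.
Proof.
  intros Hw. apply Rabs_def2 in Hw.
  assert (P : 0 < 1 + 2 * k * y) by lra.
  assert (Spos := sqrt_lt_R0 _ P). assert (Q := sqrt_sqrt _ (Rlt_le _ _ P)).
  unfold hD. set (s := sqrt (1 + 2 * k * y)) in *.
  replace (s + y * (k * / s)) with ((s * s + k * y) / s) by (field; lra).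
  apply Rdiv_lt_0_compat; lra.
Qed.

Lemma pointwise eps k p : eps <> 0 -> ball0 (rr k) p ->
  exists J : nat -> nat -> R,
    (forall i j, (i < 3)%nat -> (j < 3)%nat ->
       pd (fun q => coord (Phi eps k q) i) j p (J i j)) /\
    det3 J <> 0 /\
    (forall v, SDist (Ft1 eps k) Ft2 p v <->
       dapp J 2 v - coord (Phi eps k p) 1 ^ 2 / 2 * dapp J 0 v = 0) /\
    (forall a b,
       let v := vadd (vscal a (Ft1 eps k p)) (vscal b (Ft2 p)) in
       a ^ 2 + b ^ 2 =
         dapp J 0 v ^ 2 / (eps ^ 2 * (1 + coord (Phi eps k p) 0) ^ 2)
         + dapp J 1 v ^ 2 / (hh k (rr k) (coord (Phi eps k p) 1)) ^ 2).
Proof.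
  intros Heps Hp.
  assert (Hy := ball_y _ _ (rr_pos k) Hp).
  assert (Hw := small _ _ Hy).
  assert (Hh := hD_pos _ _ Hw).
  exists (Jf eps k p).
  assert (Hw' := Hw). apply Rabs_def2 in Hw'.
  assert (HP : 0 < 1 + 2 * k * coord p 1) by lra.
  split; [|split; [|split]].
  - intros i j Hi Hj. eapply pd_ext; [intros q; apply Phi_coord; auto|].
    apply pd_ev, ok_all, HP.
  - destruct p as [[x y] z]. cbn [coord fst snd] in Hy, Hw, Hh, Hw', HP.
    unfold det3. rewrite J00, J01, J02, J10, J11, J12, J20, J21, J22 by auto.
    assert (Ex := exp_pos (- eps * x)).
    replace (exp (- eps * x) * (hD k y * exp (- eps * x) - 0 * 0) -
       0 * (0 * exp (- eps * x) - 0 * (- eps * z * exp (- eps * x))) +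
       0 * (0 * 0 - hD k y * (- eps * z * exp (- eps * x))))
      with (exp (- eps * x) * hD k y * exp (- eps * x)) by ring.
    apply Rgt_not_eq. apply Rmult_gt_0_compat; [|auto]. apply Rmult_gt_0_compat; auto.
  - destruct p as [[x y] z]. cbn [coord fst snd] in Hy, Hw, Hh, Hw', HP.
    assert (Q := sqrt_sqrt _ (Rlt_le _ _ HP)).
    assert (Ex := exp_pos (- eps * x)).
    intros v. unfold dapp. rewrite J00, J01, J02, J20, J21, J22 by auto.
    change (coord (Phi eps k (x, y, z)) 1) with (y * sqrt (1 + 2 * k * y)).
    set (s := sqrt (1 + 2 * k * y)) in *.
    replace ((y * s) ^ 2) with (y ^ 2 * (s * s)) by ring. rewrite Q.
    unfold SDist. split.
    + intros [cs Hcs]. subst v. rewrite !lc2. unfold Ft1, Ft2, fM; cbn [coord fst snd]. field.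
    + intros Heq. destruct v as [[v0 v1] v2]. cbn [coord fst snd] in Heq.
      assert (Hz : exp (- eps * x) * (v2 - (eps * z + y ^ 2 / 2 + k * y ^ 3) * v0) = 0).
      { rewrite <- Heq. field. }
      destruct (Rmult_integral _ _ Hz) as [E0|E0]; [lra|].
      exists [v0; v1]. apply pt_eq; rewrite lc2; cbn [nth]; unfold Ft1, Ft2, fM; cbn [coord fst snd]; lra.
  - destruct p as [[x y] z]. cbn [coord fst snd] in Hy, Hw, Hh, Hw', HP.
    assert (Ex := exp_pos (- eps * x)).
    intros a b. cbv zeta. unfold dapp. rewrite J00, J01, J02, J10, J11, J12 by auto.
    unfold Phi, P0, P1; cbn [ev coord fst snd].
    rewrite hh_spec by auto.
    replace (1 + (- / eps * exp (- eps * x) + -1)) with (- (exp (- eps * x) / eps)) by (field; auto).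
    unfold vadd, vscal, Ft1, Ft2; cbn [coord fst snd].
    field. split; [lra|]. split; [auto|lra].
Qed.

Lemma Phi_inj eps k p q : eps <> 0 -> ball0 (rr k) p -> ball0 (rr k) q ->
  Phi eps k p = Phi eps k q -> p = q.
Proof.
  intros Heps Hp Hq H.
  assert (Hwp := small _ _ (ball_y _ _ (rr_pos k) Hp)).
  assert (Hwq := small _ _ (ball_y _ _ (rr_pos k) Hq)).
  destruct p as [[x1 y1] z1], q as [[x2 y2] z2]. cbn [coord fst snd] in *.
  unfold Phi, P0, P1, P2 in H. injection H as H0 H1 H2. cbn [ev coord fst snd] in H0, H1, H2.
  assert (Ee : exp (- eps * x1) = exp (- eps * x2)).
  { apply (Rmult_eq_reg_l (- / eps)); [lra|]. apply Ropp_neq_0_compat, Rinv_neq_0_compat; auto. }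
  apply exp_inv in Ee.
  assert (Hx : x1 = x2) by (apply (Rmult_eq_reg_l (- eps)); [lra|]; lra).
  subst x2.
  assert (Hz : z1 = z2) by (apply (Rmult_eq_reg_r (exp (- eps * x1))); [auto|]; apply Rgt_not_eq, exp_pos).
  subst z2.
  assert (Hy : y1 = y2) by (apply (Yinj k); auto).
  subst; reflexivity.
Qed.

Theorem proposition3 (eps eps' : R) (Heps : eps <> 0) :
  (exists B B1 B2 : vfield,
     is_lie_bracket (Ft1 eps eps') Ft2 B /\
     is_lie_bracket (Ft1 eps eps') B B1 /\
     is_lie_bracket Ft2 B B2 /\
     exists r, 0 < r /\
       forall p, ball0 r p ->
         (martinet_pt (Ft1 eps eps') Ft2 B p <-> coord p 1 = 0) /\
         (coord p 1 = 0 -> forall v, SDist3 (Ft1 eps eps') Ft2 B B1 B2 p v))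
  /\
  (exists (r : R) (Phi : pt -> pt) (h : R -> R),
     0 < r /\
     (forall i, (i < 3)%nat -> smooth_on (fun q => coord (Phi q) i) (ball0 r)) /\
     (forall p q, ball0 r p -> ball0 r q -> Phi p = Phi q -> p = q) /\
     (forall c, 0 < c -> exists d, 0 < d /\
        forall t, t <> 0 -> Rabs t < d ->
          Rabs (h t - (1 + 2 * eps' * t)) <= c * Rabs t) /\
     (forall p, ball0 r p ->
        exists J : nat -> nat -> R,
          (forall i j, (i < 3)%nat -> (j < 3)%nat ->
             pd (fun q => coord (Phi q) i) j p (J i j)) /\
          det3 J <> 0 /\
          (forall v, SDist (Ft1 eps eps') Ft2 p v <->
             dapp J 2 v - coord (Phi p) 1 ^ 2 / 2 * dapp J 0 v = 0) /\
          (forall a b,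
             let v := vadd (vscal a (Ft1 eps eps' p)) (vscal b (Ft2 p)) in
             a ^ 2 + b ^ 2 =
               dapp J 0 v ^ 2 / (eps ^ 2 * (1 + coord (Phi p) 0) ^ 2)
               + dapp J 1 v ^ 2 / (h (coord (Phi p) 1)) ^ 2))).
Proof.
  split.
  - exists (Bf eps'), (B1f eps eps'), (B2f eps').
    destruct (part1_brackets eps eps') as [H1 [H2 H3]].
    split; [auto|]. split; [auto|]. split; [auto|].
    exists (rr eps'). split; [apply rr_pos|].
    intros p Hp. apply martinet. apply small, ball_y; auto using rr_pos.
  - exists (rr eps'), (Phi eps eps'), (hh eps' (rr eps')).
    split; [apply rr_pos|].
    assert (HU : forall q, ball0 (rr eps') q -> 0 < 1 + 2 * eps' * coord q 1).
    { intros q Hq. assert (Hw := small _ _ (ball_y _ _ (rr_pos eps') Hq)).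
      apply Rabs_def2 in Hw. lra. }
    split.
    { intros i Hi n. destruct i as [|[|[|i]]].
      - exact (Cn_ev eps' _ HU n (P0 eps)).
      - exact (Cn_ev eps' _ HU n P1).
      - exact (Cn_ev eps' _ HU n (P2 eps)).
      - lia. }
    split; [intros p q Hp Hq; apply Phi_inj; auto|].
    split; [apply hh_o|].
    intros p Hp. apply pointwise; auto.
Qed.
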